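(* Let $B_1,\ldots,B_r$ be size-$2$ subsets of $\mathbb Z_T$ with $r\ge T^3$. Then there exists a nontrivial subgroup $H\le\mathbb Z_T$ such that the multiset $B_1+B_2+\cdots+B_r$ has bias at most $4T^{3/2}/r^{1/2}$ with respect to $H$.
   Context: $\mathbb Z_T$ is the additive cyclic group of order $T$. For multisets $A,B$, $A+B=\{a+b:a\in A,b\in B\}$ as a multiset; $\mu_A(x)$ is the multiplicity of $x$ in $A$. A multiset $A$ has bias at most $\epsilon$ with respect to a subgroup $H$ if $\mu_A(a)\le(1+\epsilon)\mu_A(a+h)$ for all $a\in A$ and all $h\in H$. *)

(* Defs.v *)
From HB Require Import structures.
From mathcomp Require Import all_boot all_order all_algebra all_fingroup.
From mathcomp Require Import reals.
Set Implicit Arguments. Unset Strict Implicit. Unset Printing Implicit Defensive.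
Import Order.TTheory GRing.Theory Num.Theory.
Local Open Scope ring_scope.

Definition sumset_mult (T r : nat) (B : 'I_r -> {set 'Z_T}) (x : 'Z_T) : nat :=
  #|[set f : {ffun 'I_r -> 'Z_T} | [forall i, f i \in B i] && (\sum_i f i == x)]|.

Definition bias_at_most (R : realType) (T : nat) (mu : 'Z_T -> nat)
    (H : {set 'Z_T}) (eps : R) : Prop :=
  forall a h : 'Z_T, (0 < mu a)%N -> h \in H ->
    (mu a)%:R <= (1 + eps) * (mu (a + h))%:R.

(* Main.v *)
Require Import Defs.
From HB Require Import structures.
From mathcomp Require Import all_boot all_order all_algebra all_fingroup all_solvable.
From mathcomp Require Import reals.
From mathcomp Require Import zify ring lra.
Set Implicit Arguments. Unset Strict Implicit. Unset Printing Implicit Defensive.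
Import Order.TTheory GRing.Theory Num.Theory.

Module Part0.

Lemma bin_up n i : i < n./2 -> 'C(n, i) <= 'C(n, i.+1).
Proof.
move=> hi; have e := mul_bin_left n i.
have h1 : i.+1 <= n - i by lia.
have : i.+1 * 'C(n, i) <= i.+1 * 'C(n, i.+1) by rewrite e leq_mul2r h1 orbT.
by rewrite leq_pmul2l.
Qed.

Lemma bin_down n i : n./2 <= i -> 'C(n, i.+1) <= 'C(n, i).
Proof.
move=> hi; have e := mul_bin_left n i.
have h1 : n - i <= i.+1 by lia.
have : i.+1 * 'C(n, i.+1) <= i.+1 * 'C(n, i) by rewrite e leq_mul2r h1 orbT.
by rewrite leq_pmul2l.
Qed.

Lemma tele_sum n L :
  \sum_(0 <= i < L) ('C(n, i) - 'C(n, i.+1)) + 'C(n, maxn L n./2) <= 'C(n, n./2).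
Proof.
elim: L => [|L IH]; first by rewrite big_nil max0n.
rewrite big_nat_recr //=.
case: (ltnP L n./2) => hL.
  have := bin_up hL; have -> : maxn L.+1 n./2 = n./2 by lia.
  rewrite (_ : maxn L n./2 = n./2) in IH; last by lia.
  move=> hb; have -> : 'C(n, L) - 'C(n, L.+1) = 0 by apply/eqP; rewrite subn_eq0.
  by rewrite addn0.
have := bin_down hL; have -> : maxn L.+1 n./2 = L.+1 by lia.
rewrite (_ : maxn L n./2 = L) in IH; last by lia.
move=> hb; lia.
Qed.

Lemma tele_sum' n L :
  \sum_(0 <= i < L) ('C(n, i) - 'C(n, i.+1)) <= 'C(n, n./2).
Proof. by apply: leq_trans (tele_sum n L); apply: leq_addr. Qed.

Lemma reidx (g : nat -> nat) t k Q :
  \sum_(q < Q) \sum_(i < k) g (t + q * k + i) = \sum_(0 <= j < Q * k) g (t + j).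
Proof.
elim: Q => [|Q IH]; first by rewrite big_ord0 mul0n big_nil.
rewrite big_ord_recr /= IH mulSn [k + _]addnC (@big_cat_nat _ _ _ (Q * k) 0 (Q * k + k)) //=; last by lia.
congr (_ + _).
rewrite -[X in \sum_(X <= _ < _) _](add0n (Q * k)) big_addn.
have -> : Q * k + k - Q * k = k by lia.
rewrite big_mkord; apply: eq_bigr => i _; congr g; lia.
Qed.

Lemma tele_one n a h : 'C(n, a) <= 'C(n, a + h) + \sum_(i < h) ('C(n, a + i) - 'C(n, (a + i).+1)).
Proof.
elim: h => [|h IH]; first by rewrite addn0 big_ord0 addn0.
rewrite big_ord_recr /= addnS.
move: IH; set S := \sum_(i < h) _; set u := 'C(n, a); set v := 'C(n, a + h); set w := 'C(n, (a + h).+1).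
lia.
Qed.

Definition beta n k t := \sum_(q < n.+1) 'C(n, t + q * k).

Lemma beta_shift n k t : 0 < k -> beta n k (t + k) <= beta n k t.
Proof.
move=> k0; rewrite /beta big_ord_recr /= big_ord_recl /=.
rewrite (@bin_small n (t + k + n * k)); last by nia.
rewrite addn0; apply: leq_trans (leq_addl _ _).
apply: leq_sum => i _; rewrite /bump /=; apply: eq_leq; congr 'C(_, _); lia.
Qed.

Lemma beta_spread n k t t' : 0 < k -> t < k -> t' < k ->
  beta n k t <= beta n k t' + 'C(n, n./2).
Proof.
move=> k0 tk t'k.
pose h := if t <= t' then t' - t else t' + k - t.
have hk : h <= k by rewrite /h; case: ifP => hh; lia.
have hb : beta n k (t + h) <= beta n k t'.
  rewrite /h; case: ifP => ht.
    by have -> : t + (t' - t) = t' by lia.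
  have -> : t + (t' + k - t) = t' + k by lia.
  exact: beta_shift.
pose g i := 'C(n, i) - 'C(n, i.+1).
have step : beta n k t <= beta n k (t + h) + \sum_(q < n.+1) \sum_(i < h) g (t + q * k + i).
  rewrite /beta -big_split /=; apply: leq_sum => q _.
  have -> : t + h + q * k = (t + q * k) + h by lia.
  exact: tele_one.
have w : \sum_(q < n.+1) \sum_(i < h) g (t + q * k + i) <= \sum_(q < n.+1) \sum_(i < k) g (t + q * k + i).
  apply: leq_sum => q _.
  rewrite -(subnKC hk) big_split_ord /=; exact: leq_addr.
rewrite reidx in w.
have w2 : \sum_(0 <= j < n.+1 * k) g (t + j) <= \sum_(0 <= j < t + n.+1 * k) g j.
  rewrite [X in _ <= X](@big_cat_nat _ _ _ t) //=; last by lia.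
  rewrite [X in _ <= _ + X](_ : _ = \sum_(0 <= j < n.+1 * k) g (t + j)); first exact: leq_addl.
  rewrite -[X in \sum_(X <= _ < _) _ = _](add0n t) big_addn [t + _]addnC addnK.
  by apply: eq_bigr => i _; congr g; lia.
have w3 : \sum_(0 <= j < t + n.+1 * k) g j <= 'C(n, n./2) := tele_sum' n _.
move: step hb w w2 w3.
set A1 := beta n k t; set A2 := beta n k (t + h); set A3 := beta n k t'.
set S1 := \sum_(q < n.+1) _; set S2 := \sum_(0 <= j < n.+1 * k) _; set S3 := \sum_(0 <= j < _) g j.
lia.
Qed.

Lemma beta_mod n k t : 0 < k -> t < k ->
  \sum_(l < n.+1) 'C(n, l) * (l %% k == t) = beta n k t.
Proof.
move=> k0 tk.
have e1 : \sum_(l < n.+1) 'C(n, l) * (l %% k == t) =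
          \sum_(0 <= l < n.+1 * k) 'C(n, l) * (l %% k == t).
  rewrite (@big_cat_nat _ _ _ n.+1) //=; last by nia.
  rewrite [X in _ = _ + X]big1_seq ?addn0 ?big_mkord // => i /andP[_].
  rewrite mem_index_iota => /andP[hi _]; by rewrite bin_small.
rewrite e1 -[X in X = _]/(\sum_(0 <= l < n.+1 * k) (fun j => 'C(n, j) * (j %% k == t)) (0 + l)).
rewrite -(reidx (fun j => 'C(n, j) * (j %% k == t)) 0 k n.+1) /beta; apply: eq_bigr => q _.
rewrite (eq_bigr (fun i : 'I_k => if (i : nat) == t then 'C(n, q * k + t) else 0)); last first.
  move=> i _; rewrite add0n modnMDl modn_small //.
  by case: eqP => [->|_]; rewrite ?muln1 ?muln0.
rewrite -big_mkcond /=.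
rewrite (big_ord1_eq _ (fun i => 'C(n, q * k + t))) tk addnC //.
Qed.

Lemma sum_bin n : \sum_(l < n.+1) 'C(n, l) = 2 ^ n.
Proof.
rewrite -[2]/(1 + 1) expnDn; apply: eq_bigr => i _; by rewrite !exp1n !muln1.
Qed.

Lemma binE1 j : j.+1 * 'C(j.*2.+1, j) = j.*2.+1 * 'C(j.*2, j).
Proof.
have := mul_bin_diag j.*2.+1 j; rewrite /= => ->.
have e : j.*2.+1 - j = j.+1 by rewrite -addnn; lia.
by rewrite -(@bin_sub j.*2.+1 j) ?e // -addnn; lia.
Qed.

Lemma binE2 j : 'C(j.*2.+2, j.+1) = 2 * 'C(j.*2.+1, j).
Proof.
have e : j.*2.+1 - j = j.+1 by rewrite -addnn; lia.
rewrite binS -(@bin_sub j.*2.+1 j) ?e; first by rewrite mul2n addnn.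
by rewrite -addnn; lia.
Qed.
Lemma bin_even j : 4 * j.+1.*2.+1 * 'C(j.+1.*2, j.+1) ^ 2 <= 3 * 16 ^ j.+1.
Proof.
elim: j => [|j IH]; first by [].
set J := j.+1 in IH *.
set c := 'C(J.*2, J) in IH *.
have e2 : 'C(J.+1.*2, J.+1) = 2 * 'C(J.*2.+1, J) by rewrite doubleS binE2.
set b := 'C(J.*2.+1, J) in e2.
have e1 : J.+1 * b = J.*2.+1 * c by rewrite /b /c binE1.
rewrite e2.
have hJ : 0 < J.+1 ^ 2 by [].
rewrite -(leq_pmul2r hJ).
have E : 4 * J.+1.*2.+1 * (2 * b) ^ 2 * J.+1 ^ 2 = 16 * J.+1.*2.+1 * (J.+1 * b) ^ 2 by lia.
rewrite E e1.
have E2 : 16 * J.+1.*2.+1 * (J.*2.+1 * c) ^ 2 = 4 * ((J.+1.*2.+1 * J.*2.+1) * (4 * (J.*2.+1 * c ^ 2))) by lia.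
have E3 : 3 * 16 ^ J.+1 * J.+1 ^ 2 = 4 * ((4 * J.+1 ^ 2) * (3 * 16 ^ J)) by rewrite expnS; lia.
rewrite E2 E3 leq_mul2l /=; apply: leq_mul.
  by nia.
by rewrite mulnA.
Qed.

Lemma bin_bound n : 0 < n -> 4 * n.+1 * 'C(n, n./2) ^ 2 <= 3 * 4 ^ n.
Proof.
move=> n0; have e := odd_double_half n.
case: (boolP (odd n)) e => on e.
  set j := n./2 in e *; rewrite -e /= add1n.
  have h := bin_even j.
  rewrite !doubleS binE2 in h.
  have -> : 4 ^ (j.*2.+1) = 4 * 16 ^ j by rewrite expnS -mul2n expnM.
  rewrite [16 ^ _]expnS in h.
  move: h; set b := 'C(j.*2.+1, j); set Y := 16 ^ j => h.
  nia.
rewrite /= add0n in e.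
move: n0; rewrite -e; set j := n./2; case: j => [|j] //= _.
rewrite doubleK.
have -> : 4 ^ j.+1.*2 = 16 ^ j.+1 by rewrite -mul2n expnM.
exact: bin_even.
Qed.

End Part0.
Import Part0.

Module Part1.

Lemma sum_pred1 (X : finType) (a : X) (P : pred X) :
  \sum_x ((x == a) && P x) = P a.
Proof.
rewrite (bigD1 a) //= eqxx big1 ?addn0 // => x /negPf ->; by [].
Qed.

Section Count.
Variables (T r : nat).
Local Notation G := 'Z_T.
Implicit Types (A : 'I_r -> {set G}) (S : {set 'I_r}).

Definition restr A S i := if i \in S then A i else [set 0%R : G].
Definition inF A (f : {ffun 'I_r -> G}) := [forall i, f i \in A i].

Lemma sumset_sum A y : sumset_mult A y = \sum_f (inF A f && ((\sum_i f i)%R == y)).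
Proof.
rewrite /sumset_mult -sum1_card big_mkcond /=; apply: eq_bigr => f _.
by rewrite inE /inF; case: ifP.
Qed.

Lemma sumset_eq A A' : (forall i, A i = A' i) -> sumset_mult A =1 sumset_mult A'.
Proof.
move=> e x; rewrite !sumset_sum; apply: eq_bigr => f _; congr (_ && _).
by apply: eq_forallb => i; rewrite e.
Qed.

Definition pS S (f : {ffun 'I_r -> G}) := [ffun i => if i \in S then f i else 0%R].
Definition pSc S (f : {ffun 'I_r -> G}) := [ffun i => if i \in S then 0%R else f i].
Definition fadd (g h : {ffun 'I_r -> G}) := [ffun i => (g i + h i)%R].

Lemma split_claim A S f g h :
  ((f == fadd g h) && inF (restr A S) g && inF (restr A (~: S)) h) =
  ((g == pS S f) && (h == pSc S f) && inF A f).
Proof.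
apply/idP/idP.
  case/andP=> /andP[/eqP -> /forallP Hg] /forallP Hh.
  have g0 i : i \notin S -> g i = 0%R.
    by move=> iS; move: (Hg i); rewrite /restr (negPf iS) inE => /eqP.
  have h0 i : i \in S -> h i = 0%R.
    by move=> iS; move: (Hh i); rewrite /restr inE iS /= inE => /eqP.
  apply/andP; split; first (apply/andP; split).
  - apply/eqP/ffunP => i; rewrite !ffunE; case: (boolP (i \in S)) => iS.
      by rewrite h0 ?addr0.
    by rewrite g0.
  - apply/eqP/ffunP => i; rewrite !ffunE; case: (boolP (i \in S)) => iS.
      by rewrite h0.
    by rewrite g0 ?add0r.
  - apply/forallP => i; rewrite ffunE; case: (boolP (i \in S)) => iS.
      by rewrite h0 // addr0; move: (Hg i); rewrite /restr iS.
    by rewrite g0 // add0r; move: (Hh i); rewrite /restr inE iS.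
case/andP=> /andP[/eqP -> /eqP ->] /forallP Hf.
apply/andP; split; first (apply/andP; split).
- apply/eqP/ffunP => i; rewrite !ffunE; case: (i \in S); by rewrite ?addr0 ?add0r.
- apply/forallP => i; rewrite ffunE /restr; case: (i \in S) => //; by rewrite inE.
- apply/forallP => i; rewrite ffunE /restr inE; case: (i \in S) => //=; by rewrite inE.
Qed.

Lemma decomp A S y :
  sumset_mult A y = \sum_z sumset_mult (restr A S) z * sumset_mult (restr A (~: S)) (y - z)%R.
Proof.
rewrite sumset_sum.
transitivity (\sum_g \sum_h (inF (restr A S) g && inF (restr A (~: S)) h &&
                           ((\sum_i g i + \sum_i h i)%R == y))).
  transitivity (\sum_f \sum_g \sum_h ((h == pSc S f) && ((g == pS S f) && (inF A f && ((\sum_i f i)%R == y))))).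
    apply: eq_bigr => f _.
    under eq_bigr => g _ do rewrite sum_pred1.
    by rewrite sum_pred1.
  rewrite exchange_big /=; apply: eq_bigr => g _.
  rewrite exchange_big /=; apply: eq_bigr => h _.
  transitivity (\sum_f ((f == fadd g h) && (inF (restr A S) g && inF (restr A (~: S)) h && ((\sum_i f i)%R == y)))).
    apply: eq_bigr => f _.
    have := split_claim A S f g h.
    case: (f == fadd g h) => /=; case: (g == pS S f) => /=; case: (h == pSc S f) => /=;
    case: (inF _ g); case: (inF _ h); case: (inF A f) => //=.
  rewrite sum_pred1; congr (_ && (_ == _)).
  by rewrite -big_split /=; apply: eq_bigr => i _; rewrite ffunE.
transitivity (\sum_g \sum_h \sum_z ((inF (restr A S) g && ((\sum_i g i)%R == z)) *
                     (inF (restr A (~: S)) h && ((\sum_i h i)%R == y - z)%R))).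
  apply: eq_bigr => g _; apply: eq_bigr => h _.
  rewrite (bigD1 (\sum_i g i)%R) //= eqxx andbT [X in _ = _ + X]big1 ?addn0; last first.
    by move=> z /negPf; rewrite eq_sym => ->; rewrite andbF.
  rewrite mulnb andbA; congr (_ && _).
  by rewrite [RHS]eq_sym subr_eq eq_sym addrC.
under eq_bigr => g _ do rewrite exchange_big.
rewrite exchange_big /=; apply: eq_bigr => z _.
rewrite !sumset_sum big_distrl /=; apply: eq_bigr => g _.
by rewrite big_distrr.
Qed.

Lemma sum_ord1 N c (P : nat -> bool) : c < N ->
  \sum_(l < N) ((c == l) && P l) = P c.
Proof.
move=> hc; rewrite (bigD1 (Ordinal hc)) //= eqxx /= big1 ?addn0 // => l hl.
case: eqP => // e; move: hl; suff -> : l = Ordinal hc by rewrite eqxx.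
by apply: val_inj; rewrite /= e.
Qed.

Definition fE S (x : 'I_r -> G) (d : G) (E : {set 'I_r}) :=
  [ffun i => if i \in S then (x i + d *+ (i \in E))%R else 0%R].
Definition E0 S (x : 'I_r -> G) (f : {ffun 'I_r -> G}) := [set i in S | f i != x i].

Lemma addr_neq (a d : G) : d != 0%R -> (a + d)%R != a.
Proof. by move=> d0; rewrite -subr_eq0 addrAC subrr add0r. Qed.

Lemma block_claim A S (x : 'I_r -> G) (d : G) (f : {ffun 'I_r -> G}) (E : {set 'I_r}) : d != 0%R -> (forall i, i \in S -> A i = [set x i; (x i + d)%R]) ->
  ((E \subset S) && (f == fE S x d E)) = inF (restr A S) f && (E == E0 S x f).
Proof.
move=> d0 hA; apply/idP/idP.
  case/andP=> /subsetP sES /eqP ->; apply/andP; split.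
    apply/forallP => i; rewrite ffunE /restr; case: (boolP (i \in S)) => iS; last by rewrite inE.
    rewrite hA // !inE; case: (i \in E); by rewrite ?mulr1n ?mulr0n ?addr0 eqxx ?orbT.
  apply/eqP/setP => i; rewrite inE ffunE.
  case: (boolP (i \in E)) => iE.
    by rewrite (sES _ iE) /= mulr1n addr_neq.
  by case: (i \in S); rewrite //= mulr0n addr0 eqxx.
case/andP=> /forallP hf /eqP ->; apply/andP; split.
  by apply/subsetP => i; rewrite inE => /andP[].
apply/eqP/ffunP => i; rewrite ffunE inE.
move: (hf i); rewrite /restr; case: (boolP (i \in S)) => iS; last by rewrite inE => /eqP.
rewrite hA // !inE => /orP[] /eqP ->; first by rewrite eqxx /= mulr0n addr0.
by rewrite addr_neq //= mulr1n.
Qed.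

Lemma sum_fE S (x : 'I_r -> G) (d : G) (E : {set 'I_r}) : E \subset S ->
  (\sum_i fE S x d E i = \sum_(i in S) x i + d *+ #|E|)%R.
Proof.
move=> sES.
rewrite (eq_bigr (fun i => if i \in S then (x i + d *+ (i \in E))%R else 0%R)); last by move=> i _; rewrite ffunE.
rewrite -big_mkcond /= big_split /= sumrMnr; congr (_ + _)%R.
have -> : (\sum_(i in S) (i \in E) = \sum_(i | (i \in S) && (i \in E)) 1)%N.
  by rewrite big_mkcondr /=; apply: eq_bigr => i _; case: (i \in E).
rewrite sum1_card; congr (d *+ _)%R; apply: eq_card => i.
rewrite unfold_in /=.
by case: (boolP (i \in E)) => iE; rewrite ?andbF ?andbT // (subsetP sES).
Qed.

Lemma block A S (x : 'I_r -> G) (d : G) (y : G) : d != 0%R -> (forall i, i \in S -> A i = [set x i; (x i + d)%R]) ->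
  sumset_mult (restr A S) y =
  \sum_(l < #|S|.+1) 'C(#|S|, l) * ((\sum_(i in S) x i + d *+ l)%R == y).
Proof.
move=> d0 hA; rewrite sumset_sum.
transitivity (\sum_(f : {ffun 'I_r -> G}) \sum_(E : {set 'I_r}) ((E \subset S) && (f == fE S x d E) && ((\sum_i f i)%R == y))).
  apply: eq_bigr => f _.
  rewrite -(sum_pred1 (E0 S x f) (fun _ => inF (restr A S) f && ((\sum_i f i)%R == y))).
  apply: eq_bigr => E _; rewrite (block_claim f E d0 hA).
  by case: (inF _ f); case: (E == _); case: (_ == y).
rewrite exchange_big /=.
transitivity (\sum_(E : {set 'I_r}) ((E \subset S) && ((\sum_(i in S) x i + d *+ #|E|)%R == y))).
  apply: eq_bigr => E _.
  transitivity (\sum_(f : {ffun 'I_r -> G}) ((f == fE S x d E) && ((E \subset S) && ((\sum_i f i)%R == y)))).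
    by apply: eq_bigr => f _; case: (E \subset S); case: (f == _); case: (_ == y).
  rewrite sum_pred1; case: (boolP (E \subset S)) => //= sES.
  by rewrite sum_fE.
transitivity (\sum_(E : {set 'I_r}) \sum_(l < #|S|.+1) ((#|E| == l) && ((E \subset S) && ((\sum_(i in S) x i + d *+ l)%R == y)))).
  apply: eq_bigr => E _; case: (boolP (E \subset S)) => sES; last by rewrite [RHS]big1 // => l _; rewrite /= andbF.
  have hc : #|E| < #|S|.+1 by rewrite ltnS subset_leq_card.
  by rewrite (@sum_ord1 _ #|E| (fun l : nat => true && ((\sum_(i in S) x i + d *+ l)%R == y))).
rewrite exchange_big /=; apply: eq_bigr => l _.
rewrite -(cards_draws S l) -sum1_card big_distrl [RHS]big_mkcond /=.
apply: eq_bigr => E _; rewrite inE.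
by case: (E \subset S); case: (#|E| == l); case: (_ == y).
Qed.

End Count.

End Part1.
Import Part1.

Module Part2.

Section Props.
Variables (T r : nat).
Local Notation G := 'Z_T.
Variables (A : 'I_r -> {set G}) (S : {set 'I_r}) (x : 'I_r -> G) (d : G).
Hypothesis d0 : d != 0%R.
Hypothesis hA : forall i, i \in S -> A i = [set x i; (x i + d)%R].
Local Notation n := #|S|.
Local Notation X := (\sum_(i in S) x i)%R.
Local Notation N := (sumset_mult (restr A S)).

Lemma eq_shift (a b y : G) : ((a + b)%R == y) = (b == y - a)%R.
Proof. by rewrite eq_sym addrC -subr_eq eq_sym. Qed.

Lemma P1 y : (y - X)%R \notin <[d]>%g -> N y = 0.
Proof.
move=> hy; rewrite (block _ d0 hA) big1 // => l _.
rewrite eq_shift; case: eqP => [e|]; last by rewrite muln0.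
by move: hy; rewrite -e -FinRing.zmodXgE mem_cycle.
Qed.

Lemma P2val t : t < #[d]%g -> N (X + d *+ t)%R = beta n #[d]%g t.
Proof.
move=> tk; rewrite (block _ d0 hA) -beta_mod //.
apply: eq_bigr => l _; congr (_ * nat_of_bool _).
rewrite eq_shift (_ : (X + d *+ t - X = d *+ t)%R); last by rewrite addrC addKr.
rewrite -!FinRing.zmodXgE eq_expg_mod_order.
by rewrite (modn_small tk).
Qed.

Lemma P2 y y' : (y - X)%R \in <[d]>%g -> (y' - X)%R \in <[d]>%g ->
  N y <= N y' + 'C(n, n./2).
Proof.
case/cyclePmin => t tk e; case/cyclePmin => t' t'k e'.
have -> : y = (X + d *+ t)%R by rewrite -FinRing.zmodXgE -e addrC subrK.
have -> : y' = (X + d *+ t')%R by rewrite -FinRing.zmodXgE -e' addrC subrK.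
rewrite !P2val //; apply: beta_spread => //; exact: order_gt0.
Qed.

Lemma P3 : \sum_y N y = 2 ^ n.
Proof.
under eq_bigr => y _ do rewrite (block _ d0 hA).
rewrite exchange_big /= -sum_bin; apply: eq_bigr => l _.
rewrite -big_distrr /= (bigD1 (X + d *+ l)%R) //= eqxx big1 ?addn0 ?muln1 //.
by move=> z; rewrite eq_sym => /negPf ->.
Qed.
End Props.

End Part2.
Import Part2.

Module Part3.

Section Conv.
Variables (T : nat) (H : {group 'Z_T}).
Local Notation G := 'Z_T.

Lemma coset_shift (a b h : G) : h \in H -> ((a + h - b)%R \in H) = ((a - b)%R \in H).
Proof.
move=> hH; rewrite (_ : (a + h - b = a - b + h)%R); last by rewrite addrAC.
by rewrite -FinRing.zmodMgE groupMr.
Qed.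

Lemma card_coset (X : G) : \sum_z ((z - X)%R \in H : nat) = #|H|.
Proof.
rewrite (reindex_inj (addIr X)) /=.
under eq_bigr => u _ do rewrite addrK.
by rewrite -sum1_card [RHS]big_mkcond.
Qed.

Variables (N1 N2 : G -> nat) (X1 X2 : G) (D : nat).
Hypothesis s1 : forall y, (y - X1)%R \notin H -> N1 y = 0.
Hypothesis s2 : forall y, (y - X2)%R \notin H -> N2 y = 0.
Hypothesis sp1 : forall y y', (y - X1)%R \in H -> (y' - X1)%R \in H -> N1 y <= N1 y' + D.
Hypothesis sp2 : forall y y', (y - X2)%R \in H -> (y' - X2)%R \in H -> N2 y <= N2 y' + D.

Definition conv y := \sum_z N1 z * N2 (y - z)%R.

Lemma conv_bal y h : h \in H ->
  \sum_z ((z - X1)%R \in H) * N2 (y - z)%R = \sum_z ((z - X1)%R \in H) * N2 (y + h - z)%R.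
Proof.
move=> hH.
rewrite (reindex_inj (subrI y)) [RHS](reindex_inj (subrI (y + h)%R)) /=.
apply: eq_bigr => w _; rewrite !subKr.
by rewrite (addrAC y h) (coset_shift _ _ hH).
Qed.

Lemma conv_supp y : (y - (X1 + X2))%R \notin H -> conv y = 0.
Proof.
move=> hy; rewrite /conv big1 // => z _.
case: (boolP ((z - X1)%R \in H)) => hz; last by rewrite s1.
rewrite (s2 (y := (y - z)%R)) ?muln0 //; apply: contra hy => hz2.
have -> : (y - (X1 + X2) = (z - X1) + (y - z - X2))%R.
  by ring.
by rewrite -FinRing.zmodMgE groupM.
Qed.

Lemma conv_tot : \sum_y conv y = (\sum_z N1 z) * (\sum_z N2 z).
Proof.
rewrite /conv exchange_big big_distrl /=; apply: eq_bigr => z _.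
rewrite -big_distrr /=; congr (_ * _).
by rewrite (reindex_inj (addIr z)) /=; apply: eq_bigr => w _; rewrite addrK.
Qed.

Variable R : realFieldType.
Local Open Scope ring_scope.

Lemma conv_spread y h : h \in H ->
  (conv y)%:R <= (conv (y + h))%:R + (#|H| * D ^ 2)%:R / 2 :> R.
Proof.
move=> hH.
set Z := fun z : G => (z - X1) \in H.
have [z0 Zz0 minz0] : exists2 z0, Z z0 & forall z, Z z -> (N1 z0 <= N1 z)%N.
  have ZX : Z X1 by rewrite /Z subrr group1.
  case: (arg_minnP N1 ZX) => z0 Hz0 Hmin; by exists z0.
pose al : R := (N1 z0)%:R.
pose c : R := al + D%:R / 2.
pose del z : R := (N2 (y - z))%:R - (N2 (y + h - z))%:R.
have e1 : (conv y)%:R - (conv (y + h))%:R = \sum_z (N1 z)%:R * del z.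
  rewrite /conv !natr_sum -sumrB; apply: eq_bigr => z _; by rewrite !natrM mulrBr.
have e2 : \sum_z (Z z)%:R * del z = 0.
  have := conv_bal y hH; move/(congr1 (fun n : nat => n%:R : R)); rewrite !natr_sum => ee.
  rewrite /del; under eq_bigr => z _ do rewrite mulrBr.
  rewrite sumrB; apply/eqP; rewrite subr_eq0; apply/eqP.
  rewrite (eq_bigr (fun z => (((z - X1) \in H) * N2 (y - z))%:R)); last by move=> z _; rewrite natrM.
  rewrite ee; apply: eq_bigr => z _; by rewrite natrM.
have e3 : \sum_z (N1 z)%:R * del z = \sum_z ((N1 z)%:R - c * (Z z)%:R) * del z.
  under [RHS]eq_bigr => z _ do rewrite mulrBl -mulrA.
  by rewrite sumrB -mulr_sumr e2 mulr0 subr0.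
have bnd1 z : `|(N1 z)%:R - c * (Z z)%:R| <= D%:R / 2 * (Z z)%:R.
  case: (boolP (Z z)) => Zz.
    have l1 := minz0 _ Zz; have l2 := sp1 Zz Zz0.
    rewrite -[true%:R]/(1%:R : R) mulr1n mulr1 /c /al; rewrite -(ler_nat R) in l1; rewrite -(ler_nat R) natrD in l2.
    rewrite ler_norml; apply/andP; split; lra.
  by rewrite -[false%:R]/(0%:R : R) mulr0n s1 // mulr0 subrr normr0 mulr0.
have bnd2 z : `|del z| <= D%:R.
  rewrite /del; case: (boolP ((y - z - X2) \in H)) => hz.
    have hz' : (y + h - z - X2) \in H by rewrite (addrAC y h) (coset_shift _ _ hH).
    have l1 := sp2 hz hz'; have l2 := sp2 hz' hz.
    rewrite -(ler_nat R) natrD in l1; rewrite -(ler_nat R) natrD in l2.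
    rewrite ler_norml; apply/andP; split; lra.
  have hz' : (y + h - z - X2) \notin H by rewrite (addrAC y h) (coset_shift _ _ hH).
  by rewrite !s2 // subrr normr0.
have : (conv y)%:R - (conv (y + h))%:R <= \sum_z (D%:R / 2 * (Z z)%:R) * D%:R :> R.
  rewrite e1 e3; apply: ler_sum => z _.
  apply: le_trans (ler_norm _) _; rewrite normrM; apply: ler_pM => //.
rewrite -mulr_suml -mulr_sumr -natr_sum card_coset.
move=> hh; rewrite natrM natrX; lra.
Qed.
End Conv.

End Part3.
Import Part3.

Module Part4.

Lemma pair_set (V : finType) (x0 : V) (A : {set V}) : #|A| = 2 ->
  A = [set nth x0 (enum A) 0; nth x0 (enum A) 1] /\ nth x0 (enum A) 0 != nth x0 (enum A) 1.
Proof.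
move=> cA; have u := enum_uniq (mem A).
have sz : size (enum A) = 2 by rewrite -cardE.
move: u sz (mem_enum (mem A)); case: (enum A) => [|a [|b [|c l]]] //= u _ me.
split; last by move: u; rewrite inE andbT.
apply/setP => z; rewrite !inE -me !inE.
by case: (z == a); case: (z == b).
Qed.

Lemma exists_sub (V : finType) (A : {set V}) k : k <= #|A| ->
  exists2 S : {set V}, S \subset A & #|S| == k.
Proof.
move=> hk; have : 0 < 'C(#|A|, k) by rewrite bin_gt0.
rewrite -cards_draws => /card_gt0P [S]; rewrite inE => /andP[h1 h2]; by exists S.
Qed.

Lemma pigeon (T r : nat) (del : 'I_r -> 'Z_T) : 1 < T -> 0 < r -> (forall i, del i != 0%R) ->
  exists2 d : 'Z_T, d != 0%R & r <= (T - 1) * #|[set i | del i == d]|.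
Proof.
move=> T1 r0 hd.
case: (boolP [exists d : 'Z_T, (d != 0%R) && (r <= (T - 1) * #|[set i | del i == d]|)]).
  by case/existsP => d /andP[h1 h2]; exists d.
rewrite negb_exists => /forallP hn.
have tot : \sum_(d : 'Z_T) #|[set i | del i == d]| = r.
  transitivity #|'I_r|; last by rewrite card_ord.
  rewrite -sum1_card (partition_big del xpredT) //=.
  apply: eq_bigr => d _; rewrite -sum1_card.
  by apply: eq_bigl => i; rewrite inE.
have : (T - 1) * \sum_(d : 'Z_T) #|[set i | del i == d]| <= (T - 1) * (r - 1).
  rewrite big_distrr /= (bigD1 0%R) //=.
  have -> : #|[set i | del i == 0%R]| = 0.
    by apply: eq_card0 => i; rewrite inE (negPf (hd i)).
  rewrite muln0 add0n.
  have -> : (T - 1) * (r - 1) = \sum_(d : 'Z_T | d != 0%R) (r - 1).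
    rewrite sum_nat_const cardC1 card_ord Zp_cast //; lia.
  apply: leq_sum => d d0; move: (hn d); rewrite d0 /= -ltnNge; lia.
rewrite tot; nia.
Qed.

End Part4.
Import Part4.

Module Part5.
Local Open Scope ring_scope.

Lemma numeric (R : realType) (T r m n : nat) : (1 < T)%N -> (T ^ 3 <= r)%N -> (r <= (T - 1) * m)%N ->
  (m <= n.*2.+1)%N ->
  3 * (1 + 4 * T%:R * Num.sqrt (T%:R : R) / Num.sqrt (r%:R : R)) * T%:R ^+ 2 <=
  8 * (4 * T%:R * Num.sqrt (T%:R : R) / Num.sqrt (r%:R : R)) * (n.+1)%:R.
Proof.
move=> T1 hr hm hn.
have r0 : (0 < r)%N by apply: leq_trans hr; rewrite expn_gt0; lia.
have hr2 : (r <= 2 * T * n.+1)%N by nia.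
set t : R := T%:R; set rr : R := r%:R; set nn : R := (n.+1)%:R.
have t1 : 1 < t by rewrite ltr1n.
have rr0 : 0 < rr by rewrite ltr0n.
have hr2' : rr <= 2 * t * nn by rewrite -(ler_nat R) !natrM in hr2.
have hT3 : t ^+ 3 <= rr by rewrite /t /rr -natrX ler_nat.
set s := Num.sqrt t; set q := Num.sqrt rr.
have s2 : s ^+ 2 = t by rewrite sqr_sqrtr // ltW // (lt_trans ltr01 t1).
have q2 : q ^+ 2 = rr by rewrite sqr_sqrtr // ltW.
have q0 : 0 < q by rewrite sqrtr_gt0.
have s0 : 0 <= s by rewrite sqrtr_ge0.
set v := t * s / q.
have -> : 4 * t * s / q = 4 * v by rewrite /v !mulrA.
have t0 : 0 < t by apply: lt_trans t1.
have v0 : 0 <= v by apply: divr_ge0; [apply: mulr_ge0 => //; apply: ltW | apply: ltW].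
have vq : v * q = t * s by rewrite /v divfK // (gt_eqF q0).
have v2 : v ^+ 2 * rr = t ^+ 3.
  by rewrite -q2 -exprMn vq exprMn s2 -exprSr.
have v1 : v <= 1.
  have : v ^+ 2 <= 1.
    by rewrite -(ler_pM2r rr0) mul1r v2.
  by move=> h; nra.
suff : 3 * (1 + 4 * v) * t ^+ 2 * t <= 8 * (4 * v) * nn * t.
  by rewrite (ler_pM2r t0).
have e3 : 3 * (1 + 4 * v) * t ^+ 2 * t = 3 * (1 + 4 * v) * (v ^+ 2 * rr) by rewrite v2 [t ^+ 3]exprSr mulrA.
rewrite e3.
have a1 : 3 * (1 + 4 * v) * v ^+ 2 <= 15 * v by nra.
have a2 : 3 * (1 + 4 * v) * (v ^+ 2 * rr) <= 15 * v * rr.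
  by rewrite mulrA (ler_pM2r rr0).
have a3 : 15 * v * rr <= 15 * v * (2 * t * nn) by rewrite ler_wpM2l // mulr_ge0.
have nn0 : 0 <= nn by rewrite ler0n.
have a4 : 0 <= v * t * nn by apply: mulr_ge0 => //; apply: mulr_ge0 => //; apply: ltW.
nra.
Qed.

End Part5.
Import Part5.

Local Open Scope ring_scope.

Lemma final_bias (R : realFieldType) T (H : {group 'Z_T}) (g : 'Z_T -> nat) (Y : 'Z_T)
  (Delta e : R) (tot : nat) :
  (forall y, (y - Y) \notin H -> g y = 0%N) ->
  (forall y h, h \in H -> (g y)%:R <= (g (y + h))%:R + Delta) ->
  (\sum_y g y)%N = tot ->
  0 <= e -> #|H|%:R * Delta * (1 + e) <= e * tot%:R ->
  forall y h, h \in H -> (g y)%:R <= (1 + e) * (g (y + h))%:R.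
Proof.
move=> supp spr htot e0 key y h hH.
case: (boolP ((y - Y) \in H)) => hy; last first.
  by rewrite supp // mulr_ge0 // ?ler0n // addr_ge0.
have hy' : (y + h - Y) \in H by rewrite coset_shift.
set a := (g (y + h))%:R.
have bw w : (w - Y) \in H -> (g w)%:R <= a + Delta.
  move=> hw; have hh : (y + h - w) \in H.
    have -> : y + h - w = (y + h - Y) + - (w - Y) by ring.
    by rewrite -FinRing.zmodMgE -FinRing.zmodVgE groupM ?groupV.
  by have := spr w _ hh; rewrite [w + _]addrC subrK.
have F1 : tot%:R <= #|H|%:R * (a + Delta).
  rewrite -htot natr_sum -(card_coset H Y) natr_sum mulr_suml.
  apply: ler_sum => w _; case: (boolP ((w - Y) \in H)) => hw.
    by rewrite mul1r bw.
  by rewrite supp // mul0r.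
have K0 : 0 < #|H|%:R :> R by rewrite ltr0n cardG_gt0.
have := spr y h hH; rewrite -/a => F2.
have F3 : Delta <= e * a.
  have a0 : 0 <= a by rewrite ler0n.
  have : #|H|%:R * Delta <= #|H|%:R * (e * a) by nra.
  by rewrite ler_pM2l.
nra.
Qed.

Theorem lemma7 (R : realType) (T r : nat) (hT : (1 < T)%N)
    (B : 'I_r -> {set 'Z_T})
    (hB : forall i, #|B i| = 2%N)
    (hr : (T ^ 3 <= r)%N) :
  exists H : {group 'Z_T},
    H :!=: 1%G /\
    bias_at_most (sumset_mult B) H
      (4 * T%:R * Num.sqrt (T%:R : R) / Num.sqrt (r%:R : R)).
Proof.
pose xs i := nth 0 (enum (B i)) 0.
pose ys i := nth 0 (enum (B i)) 1.
have hxy i : B i = [set xs i; ys i] /\ xs i != ys i := pair_set 0 (hB i).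
pose del i := ys i - xs i.
have del0 i : del i != 0 by rewrite subr_eq0 eq_sym; case: (hxy i).
have hBd i : B i = [set xs i; xs i + del i].
  by case: (hxy i) => -> _; rewrite /del addrC subrK.
have r0 : (0 < r)%N by apply: leq_trans hr; rewrite expn_gt0; lia.
have [d d0 hm] := pigeon hT r0 del0.
set C := [set i | del i == d] in hm.
set m := #|C| in hm.
set n := m./2.
have hn1 : (1 <= n)%N.
  have : (2 <= m)%N by case: (leqP 2 m) => // hm2; nia.
  rewrite /n; lia.
have hmn : (m <= n.*2.+1)%N by rewrite /n; have := odd_double_half m; case: (odd m) => /=; lia.
have [S1 sS1 cS1] := exists_sub (k := n) (A := C) ltac:(rewrite /n /m; lia).
have cCS1 : #|C :\: S1| = (m - n)%N by rewrite cardsD (setIidPr sS1) (eqP cS1).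
have [S2 sS2 cS2] := exists_sub (k := n) (A := C :\: S1) ltac:(rewrite cCS1 /n; lia).
move/eqP in cS1; move/eqP in cS2.
set S := S1 :|: S2.
have hA1 i : i \in S1 -> B i = [set xs i; xs i + d].
  by move=> iS; rewrite hBd; move: (subsetP sS1 _ iS); rewrite inE => /eqP ->.
have hA2 i : i \in S2 -> B i = [set xs i; xs i + d].
  by move=> iS; rewrite hBd; move: (subsetP sS2 _ iS); rewrite !inE => /andP[_ /eqP ->].
pose N1 := sumset_mult (restr B S1).
pose N2 := sumset_mult (restr B S2).
pose X1 := \sum_(i in S1) xs i.
pose X2 := \sum_(i in S2) xs i.
pose H := <[d]>%G.
have gdef z : sumset_mult (restr B S) z = conv N1 N2 z.
  rewrite (decomp _ S1 z) /conv; apply: eq_bigr => w _; congr (_ * _)%N.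
    apply: sumset_eq => i; rewrite /restr; case: (boolP (i \in S1)) => // iS1.
    by rewrite inE iS1.
  apply: sumset_eq => i; rewrite /restr !inE.
  case: (boolP (i \in S2)) => iS2.
    have : i \in C :\: S1 by apply: (subsetP sS2).
    by rewrite inE => /andP[/negPf -> _]; rewrite orbT.
  by case: (i \in S1).
have s1 y : (y - X1) \notin H -> N1 y = 0%N by apply: (P1 d0 hA1).
have s2 y : (y - X2) \notin H -> N2 y = 0%N by apply: (P1 d0 hA2).
pose D := 'C(n, n./2).
have sp1 y y' : (y - X1) \in H -> (y' - X1) \in H -> (N1 y <= N1 y' + D)%N.
  by move=> h1 h2; have := P2 d0 hA1 h1 h2; rewrite cS1.
have sp2 y y' : (y - X2) \in H -> (y' - X2) \in H -> (N2 y <= N2 y' + D)%N.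
  by move=> h1 h2; have := P2 d0 hA2 h1 h2; rewrite cS2.
set e := 4 * T%:R * Num.sqrt (T%:R : R) / Num.sqrt (r%:R : R).
have e0 : 0 <= e.
  by rewrite /e divr_ge0 ?sqrtr_ge0 // mulr_ge0 ?sqrtr_ge0 // mulr_ge0 // ler0n.
have hnum := numeric R hT hr hm hmn.
rewrite -/e in hnum.
have hbin := bin_bound hn1; rewrite -/D in hbin.
have KT : (#|H| <= T)%N.
  by apply: leq_trans (max_card _) _; rewrite card_ord Zp_cast.
have gbias : forall y h, h \in H -> (conv N1 N2 y)%:R <= (1 + e) * (conv N1 N2 (y + h))%:R :> R.
  apply: (@final_bias R T H (conv N1 N2) (X1 + X2) ((#|H| * D ^ 2)%:R / 2) e (2 ^ n * 2 ^ n)).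
  - exact: conv_supp s1 s2.
  - move=> y h hH; exact: (conv_spread s1 s2 sp1 sp2 R y hH).
  - by rewrite conv_tot (P3 d0 hA1) (P3 d0 hA2) cS1 cS2.
  - exact: e0.
  have K0 : (0 <= #|H|%:R :> R) by rewrite ler0n.
  have KT' : (#|H|%:R <= T%:R :> R) by rewrite ler_nat.
  have hbin' : 4 * (n.+1)%:R * D%:R ^+ 2 <= 3 * 4%:R ^+ n :> R.
    by rewrite -(ler_nat R) !natrM !natrX in hbin.
  rewrite natrM natrX !natrM !natrX.
  have e4 : (3 * 4%:R ^+ n : R) = 3 * (2 ^+ n * 2 ^+ n) by rewrite -exprMn -natrM.
  rewrite e4 in hbin'.
  set K := #|H|%:R in K0 KT' *; set DD := D%:R ^+ 2 in hbin' *.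
  have DD0 : 0 <= DD by rewrite /DD exprn_ge0 // ler0n.
  set F := (2 ^+ n * 2 ^+ n : R) in hbin' *.
  set t := T%:R in hnum KT' *.
  set nn := (n.+1)%:R in hnum hbin' *.
  have KK : K * K <= t ^+ 2 by rewrite expr2; apply: ler_pM.
  have st1 : K * K * (DD * (1 + e)) <= t ^+ 2 * (DD * (1 + e)).
    apply: ler_wpM2r => //; apply: mulr_ge0 => //; lra.
  have st2 : 3 * (1 + e) * t ^+ 2 * DD <= 8 * e * nn * DD by apply: ler_wpM2r.
  have st3 : e * (4 * nn * DD) <= e * (3 * F) by apply: ler_wpM2l.
  nra.
exists H; split.
  by rewrite /H /= cycle_eq1.
move=> a h _ hH.
rewrite (decomp _ S a) (decomp _ S (a + h)) !natr_sum.
rewrite (reindex_inj (subrI a)) [X in _ <= _ * X](reindex_inj (subrI (a + h))) /=.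
rewrite mulr_sumr; apply: ler_sum => w _.
rewrite !subKr !gdef !natrM mulrA; apply: ler_wpM2r; first by rewrite ler0n.
have := gbias (a - w) h hH.
by rewrite (addrAC a h).
Qed.
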